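(* Let $\kappa$ be a regular uncountable cardinal, $J$ a $\kappa$-complete ideal on $\kappa$, and $\sigma<\kappa$ an infinite cardinal. If $\curlywedge^-(\sigma,\kappa,J)$ holds, then so does $\curlywedge^-(\sigma',\kappa,J)$ for every cardinal $\sigma'$ with $\sigma\leq\sigma'<\kappa$.
   Context: An ideal on $\kappa$ is a nonempty $J \subseteq P(\kappa)$ with $\kappa \notin J$, every bounded subset of $\kappa$ in $J$, $J$ closed under subsets and under unions of two members; $J^+ = P(\kappa)\setminus J$; $\kappa$-complete means closed under unions of fewer than $\kappa$ members. $acc(\kappa)$ is the set of nonzero limit ordinals below $\kappa$; $P_\sigma(X)=\{x\subseteq X:|x|<\sigma\}$. For an infinite cardinal $\sigma$ and a limit ordinal $\delta\geq\sigma$, a subset $C$ of $P_\sigma(\delta)$ is a generalized club if there is $F:P_\omega(\delta)\to\delta$ with $\{x\in P_\sigma(\delta) : F``P_\omega(x)\subseteq x\}\subseteq C$. $\curlywedge^-(\sigma,\kappa,J)$ asserts the existence, for $i\in\delta\in acc(\kappa)\setminus\sigma$, of a cofinal subset $C^i_\delta$ of $(P_\sigma(\delta),\subseteq)$ such that $\{\delta : \exists i<\delta\,(C^i_\delta\subseteq D)\}\in J^+$ for every generalized club $D\subseteq P_\sigma(\kappa)$. *)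

(* Defs.v *)
(* The regular uncountable cardinal kappa is modelled as a type K
   carrying a strict well-order [lt] whose order type is kappa; ordinals below
   kappa are the elements of K, subsets of kappa are predicates K -> Prop. *)
From Stdlib Require Import List.

Set Implicit Arguments.

Section Kappa.
Variable K : Type.
Variable lt : K -> K -> Prop.

Definition le (a b : K) : Prop := lt a b \/ a = b.

Definition strict_well_order : Prop :=
  (forall a, ~ lt a a) /\
  (forall a b c, lt a b -> lt b c -> lt a c) /\
  (forall a b, lt a b \/ a = b \/ lt b a) /\
  well_founded lt.

(* there is an injection from the initial segment {b | b < s} into A,
   i.e. |s| <= |A| *)
Definition seg_injects (s : K) (A : K -> Prop) : Prop :=
  exists f : K -> K,
    (forall b, lt b s -> A (f b)) /\
    (forall b c, lt b s -> lt c s -> f b = f c -> b = c).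

(* |A| < |s| (using choice, this is: no injection of s into A) *)
Definition card_lt (A : K -> Prop) (s : K) : Prop := ~ seg_injects s A.

Definition is_cardinal (s : K) : Prop :=
  forall t, lt t s -> ~ seg_injects s (fun x => lt x t).

Definition is_infinite (s : K) : Prop :=
  exists g : nat -> K, (forall n, lt (g n) s) /\
    (forall n m, g n = g m -> n = m).

Definition regular_uncountable_cardinal : Prop :=
  (forall a, ~ exists f : K -> K,
      (forall x, lt (f x) a) /\ (forall x y, f x = f y -> x = y)) /\
  (~ exists f : K -> nat, forall x y, f x = f y -> x = y) /\
  (* regular: every unbounded subset has cardinality kappa *)
  (forall X : K -> Prop, (forall a, exists x, X x /\ le a x) ->
     exists f : K -> K, (forall x, X (f x)) /\ (forall x y, f x = f y -> x = y)).

Definition bounded (X : K -> Prop) : Prop := exists a, forall x, X x -> lt x a.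

Definition subset (A B : K -> Prop) : Prop := forall x, A x -> B x.

Definition is_ideal (J : (K -> Prop) -> Prop) : Prop :=
  (exists A, J A) /\
  ~ J (fun _ => True) /\
  (forall A, bounded A -> J A) /\
  (forall A B, J B -> subset A B -> J A) /\
  (forall A B, J A -> J B -> J (fun x => A x \/ B x)).

(* kappa-complete: closed under unions of fewer than kappa members
   (families indexed by ordinals a < kappa) *)
Definition kappa_complete (J : (K -> Prop) -> Prop) : Prop :=
  forall (a : K) (F : K -> K -> Prop),
    (forall b, lt b a -> J (F b)) ->
    J (fun x => exists b, lt b a /\ F b x).

Definition positive (J : (K -> Prop) -> Prop) (A : K -> Prop) : Prop := ~ J A.

Definition is_limit (d : K) : Prop :=
  (exists x, lt x d) /\ (forall x, lt x d -> exists y, lt x y /\ lt y d).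

Definition finite_set (s : K -> Prop) : Prop :=
  exists l : list K, forall a, s a <-> In a l.

Definition P_below (sigma d : K) (x : K -> Prop) : Prop :=
  subset x (fun a => lt a d) /\ card_lt x sigma.

Definition P_kappa (sigma : K) (x : K -> Prop) : Prop := card_lt x sigma.

Definition cofinal_in (sigma d : K) (C : (K -> Prop) -> Prop) : Prop :=
  (forall x, C x -> P_below sigma d x) /\
  (forall y, P_below sigma d y -> exists x, C x /\ subset y x).

(* F is given as a function on all subsets; only its values on finite sets matter. *)
Definition gen_club (sigma : K) (D : (K -> Prop) -> Prop) : Prop :=
  exists F : (K -> Prop) -> K,
    forall x, P_kappa sigma x ->
      (forall s, finite_set s -> subset s x -> x (F s)) -> D x.

Definition wedge_minus (sigma : K) (J : (K -> Prop) -> Prop) : Prop :=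
  exists C : K -> K -> (K -> Prop) -> Prop,
    (forall i d, is_limit d -> le sigma d -> lt i d -> cofinal_in sigma d (C i d)) /\
    (forall D : (K -> Prop) -> Prop,
       (forall x, D x -> P_kappa sigma x) -> gen_club sigma D ->
       positive J (fun d => is_limit d /\ le sigma d /\
                            exists i, lt i d /\ (forall x, C i d x -> D x))).
End Kappa.

(* Main.v *)
Require Import Defs.
From Stdlib Require Import Arith List FinFun Classical ClassicalEpsilon FunctionalExtensionality PropExtensionality Lia.

Definition inj_on {A B : Type} (P : A -> Prop) (f : A -> B) (Q : B -> Prop) : Prop :=
  (forall x, P x -> Q (f x)) /\ (forall x y, P x -> P y -> f x = f y -> x = y).

Lemma pigeon (T : Type) (l : list T) (f : nat -> T) :
  (forall n, In (f n) l) -> Injective f -> False.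
Proof.
  intros Hin Hf.
  assert (H := @NoDup_incl_length T (map f (seq 0 (S (length l)))) l
                 (Injective_map_NoDup Hf (seq_NoDup _ _))).
  rewrite length_map, length_seq in H.
  assert (S (length l) <= length l) by (apply H; intros x Hx; apply in_map_iff in Hx;
     destruct Hx as [n [<- _]]; apply Hin).
  lia.
Qed.

Section Main.
Variable K : Type.
Variable lt : K -> K -> Prop.
Hypothesis Hwo : strict_well_order lt.
Variable inhK : inhabited K.

Definition seg (s : K) : K -> Prop := fun b => lt b s.

Lemma lt_irrefl a : ~ lt a a. Proof. destruct Hwo as [H _]; apply H. Qed.
Lemma lt_trans a b c : lt a b -> lt b c -> lt a c.
Proof. destruct Hwo as [_ [H _]]; apply H. Qed.
Lemma lt_tri a b : lt a b \/ a = b \/ lt b a.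
Proof. destruct Hwo as [_ [_ [H _]]]; apply H. Qed.
Lemma lt_wf : well_founded lt.
Proof. destruct Hwo as [_ [_ [_ H]]]; apply H. Qed.

Definition leastK (Q : K -> Prop) : K :=
  epsilon inhK (fun m => Q m /\ forall z, Q z -> ~ lt z m).

Lemma leastK_spec (Q : K -> Prop) : (exists m, Q m) ->
  Q (leastK Q) /\ forall z, Q z -> ~ lt z (leastK Q).
Proof.
  intros [m Hm]. unfold leastK. apply epsilon_spec.
  induction m as [m IH] using (well_founded_ind lt_wf).
  destruct (classic (exists z, Q z /\ lt z m)) as [[z [Hz Hlt]] | Hn].
  - exact (IH z Hlt Hz).
  - exists m. split; auto. intros z Hz Hlt. apply Hn. eauto.
Qed.

Section Rank.
Variables (S : Type) (P : S -> Prop) (R : S -> S -> Prop).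
Hypothesis wfR : well_founded R.
Hypothesis trR : forall p q r, P p -> P q -> P r -> R p q -> R q r -> R p r.
Hypothesis totR : forall p q, P p -> P q -> R p q \/ p = q \/ R q p.
Variable mu : K.
Hypothesis small : forall p, P p -> ~ exists h : K -> S, inj_on (seg mu) h (fun q => P q /\ R q p).

Definition Fr (p : S) (rec : forall q, R q p -> K) : K :=
  leastK (fun m => ~ exists q (h : R q p), P q /\ rec q h = m).
Definition rk : S -> K := Fix wfR (fun _ => K) Fr.

Lemma rk_eq p : rk p = leastK (fun m => ~ exists q, R q p /\ P q /\ rk q = m).
Proof.
  unfold rk at 1. rewrite Fix_eq.
  - unfold Fr. f_equal. apply functional_extensionality; intro m.
    apply propositional_extensionality. split.
    + intros H [q [h [Hq He]]]. apply H. exists q, h. auto.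
    + intros H [q [h [Hq He]]]. apply H. exists q. auto.
  - intros x f g Hfg. unfold Fr.
    assert (f = g) as ->.
    { apply functional_extensionality_dep; intro q.
      apply functional_extensionality_dep; intro h. apply Hfg. }
    reflexivity.
Qed.

Lemma rk_claim : forall p, P p ->
  (forall z, (exists q, R q p /\ P q /\ rk q = z) <-> lt z (rk p)) /\ lt (rk p) mu.
Proof.
  intros p. induction p as [p IH] using (well_founded_ind wfR). intros Pp.
  set (Img := fun z => exists q, R q p /\ P q /\ rk q = z).
  assert (Ha : forall z, Img z -> lt z mu).
  { intros z [q [Rq [Pq <-]]]. apply (IH q Rq Pq). }
  assert (Hb : forall z w, Img z -> lt w z -> Img w).
  { intros z w [q [Rq [Pq <-]]] Hw. apply (IH q Rq Pq) in Hw.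
    destruct Hw as [q' [Rq' [Pq' <-]]]. exists q'. repeat split; auto.
    apply (trR q' q p); auto. }
  assert (Hne : exists m, ~ Img m).
  { exists mu. intro H. apply (lt_irrefl mu). auto. }
  destruct (leastK_spec _ Hne) as [H1 H2].
  assert (Er : rk p = leastK (fun m => ~ Img m)) by (rewrite rk_eq; reflexivity).
  rewrite <- Er in H1, H2.
  assert (Hiff : forall z, Img z <-> lt z (rk p)).
  { intros z; split.
    - intros Hz. destruct (lt_tri z (rk p)) as [?|[E|Hl]]; auto.
      + exfalso; rewrite E in Hz; exact (H1 Hz).
      + exfalso. apply H1. eauto.
    - intros Hl. apply NNPP. intros Hn. exact (H2 z Hn Hl). }
  split; [exact Hiff|].
  assert (Hseg : (forall z, lt z mu -> Img z) -> False).
  { intros Hall. apply (small p Pp).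
    exists (fun z => epsilon (inhabits p) (fun q => R q p /\ P q /\ rk q = z)).
    split.
    - intros z Hz. destruct (epsilon_spec (inhabits p) (fun q => R q p /\ P q /\ rk q = z) (Hall z Hz)) as [A [B _]]. auto.
    - intros z w Hz Hw He.
      destruct (epsilon_spec (inhabits p) (fun q => R q p /\ P q /\ rk q = z) (Hall z Hz)) as [_ [_ E1]].
      destruct (epsilon_spec (inhabits p) (fun q => R q p /\ P q /\ rk q = w) (Hall w Hw)) as [_ [_ E2]].
      rewrite <- E1, <- E2, He. reflexivity. }
  destruct (lt_tri (rk p) mu) as [?|[He|Hl]]; auto; exfalso; apply Hseg; intros z Hz;
    apply Hiff.
  - rewrite He; auto.
  - eapply lt_trans; eauto.
Qed.

Lemma rank_lemma : exists r : S -> K, inj_on P r (seg mu) /\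
  (forall p z, P p -> lt z (r p) -> exists q, P q /\ r q = z).
Proof.
  exists rk. split; [split|].
  - intros p Pp. apply (rk_claim p Pp).
  - intros p q Pp Pq He. destruct (totR p q Pp Pq) as [H|[H|H]]; auto; exfalso.
    + assert (lt (rk p) (rk q)) by (apply (rk_claim q Pq); eauto).
      rewrite He in H0. eapply lt_irrefl; eauto.
    + assert (lt (rk q) (rk p)) by (apply (rk_claim p Pp); eauto).
      rewrite He in H0. eapply lt_irrefl; eauto.
  - intros p z Pp Hz. apply (rk_claim p Pp) in Hz. destruct Hz as [q [_ [Pq E]]]. eauto.
Qed.
End Rank.

Lemma le_trans a b c : le lt a b -> le lt b c -> le lt a c.
Proof.
  unfold le. intros [H1|<-] [H2|<-]; auto. left; eapply lt_trans; eauto.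
Qed.

Lemma lt_le_trans a b c : lt a b -> le lt b c -> lt a c.
Proof. intros H [H2|<-]; auto. eapply lt_trans; eauto. Qed.

Lemma card_bound (A : K -> Prop) (s : K) : card_lt lt A s ->
  exists b, lt b s /\ exists f, inj_on A f (seg b).
Proof.
  intros Hc.
  destruct (rank_lemma K A lt lt_wf (fun p q r _ _ _ => @lt_trans p q r)
             (fun p q _ _ => lt_tri p q) s) as [r [[Hr1 Hr2] Hd]].
  { intros p Ap [h [Hh1 Hh2]]. apply Hc. exists h. split.
    - intros b Hb. apply (Hh1 b Hb).
    - intros b c Hb Hc' E. apply Hh2; auto. }
  destruct (classic (forall z, lt z s -> exists q, A q /\ r q = z)) as [Hall|Hn].
  - exfalso. apply Hc.
    exists (fun z => epsilon inhK (fun q => A q /\ r q = z)). split.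
    + intros b Hb. apply (epsilon_spec inhK (fun q => A q /\ r q = b) (Hall b Hb)).
    + intros b c Hb Hc' E.
      destruct (epsilon_spec inhK (fun q => A q /\ r q = b) (Hall b Hb)) as [_ E1].
      destruct (epsilon_spec inhK (fun q => A q /\ r q = c) (Hall c Hc')) as [_ E2].
      rewrite <- E1, <- E2, E. reflexivity.
  - apply not_all_ex_not in Hn. destruct Hn as [b Hb].
    apply imply_to_and in Hb. destruct Hb as [Hbs Hb].
    exists b. split; auto. exists r. split; auto.
    intros q Aq. destruct (lt_tri (r q) b) as [?|[E|Hl]]; auto; exfalso; apply Hb.
    + eauto.
    + destruct (Hd q b Aq Hl) as [q' [Aq' E]]. eauto.
Qed.

Definition nextK (A : K -> Prop) (x : K) := leastK (fun z => A z /\ lt x z).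

Fixpoint gseq (A : K -> Prop) (n : nat) : K :=
  match n with 0 => leastK A | S n => nextK A (gseq A n) end.

Lemma fin_or_inf (A : K -> Prop) : (exists l, forall a, A a -> In a l) \/
  exists g : nat -> K, (forall n, A (g n)) /\ (forall n m, g n = g m -> n = m).
Proof.
  destruct (classic (exists l, forall a, A a -> In a l)) as [H|Hnf]; [left; auto|right].
  assert (Hc : forall n, A (gseq A n) /\
             (forall z, A z -> le lt z (gseq A n) -> exists k, k <= n /\ gseq A k = z) /\
             (forall k, k < n -> lt (gseq A k) (gseq A n))).
  { induction n as [|n IH].
    - assert (Hne : exists m, A m).
      { apply NNPP; intro Hn. apply Hnf. exists nil. intros a Ha. apply Hn. eauto. }
      destruct (leastK_spec A Hne) as [H1 H2]. simpl. repeat split; auto.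
      + intros z Az [Hl|E].
        * exfalso. exact (H2 z Az Hl).
        * exists 0. auto.
      + intros k Hk. lia.
    - destruct IH as [IH1 [IH2 IH3]].
      assert (Hne : exists z, A z /\ lt (gseq A n) z).
      { apply NNPP; intro Hn. apply Hnf. exists (map (gseq A) (seq 0 (S n))).
        intros a Aa. destruct (IH2 a Aa) as [k [Hk E]].
        - destruct (lt_tri a (gseq A n)) as [?|[?|?]]; unfold le; auto.
          exfalso; apply Hn; eauto.
        - apply in_map_iff. exists k. split; auto. apply in_seq. lia. }
      destruct (leastK_spec _ Hne) as [[H1 H1'] H2]. simpl. unfold nextK.
      repeat split; auto.
      + intros z Az Hz. destruct (lt_tri z (gseq A n)) as [Hl|[E|Hl]].
        * destruct (IH2 z Az (or_introl Hl)) as [k [Hk E]]. exists k. split; auto.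
        * destruct (IH2 z Az (or_intror E)) as [k [Hk E']]. exists k. split; auto.
        * destruct Hz as [Hz|E].
          -- exfalso. exact (H2 z (conj Az Hl) Hz).
          -- exists (S n). split; auto.
      + intros k Hk. destruct (Nat.eq_dec k n) as [->|Hne']; auto.
        eapply lt_trans; [apply IH3; lia| exact H1']. }
  exists (gseq A). split; [intro n; apply Hc|].
  intros n m E. destruct (Nat.lt_trichotomy n m) as [Hl|[?|Hl]]; auto; exfalso.
  - apply (lt_irrefl (gseq A m)). rewrite <- E at 1. apply Hc; auto.
  - apply (lt_irrefl (gseq A n)). rewrite E at 1. apply Hc; auto.
Qed.

Lemma hotel (c : K) : is_infinite lt c ->
  exists phi : K -> K, inj_on (fun z => le lt z c) phi (seg c).
Proof.
  intros [g [Hg1 Hg2]].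
  exists (fun z => if excluded_middle_informative (z = c) then g 0 else
            if excluded_middle_informative (exists n, g n = z) then
              g (S (epsilon (inhabits 0) (fun n => g n = z))) else z).
  split.
  - intros z Hz. destruct (excluded_middle_informative (z = c)) as [E0|E0]; [apply Hg1|].
    destruct (excluded_middle_informative (exists n, g n = z)); [apply Hg1|].
    destruct Hz as [Hz|Hz]; [exact Hz|contradiction].
  - intros z w Hz Hw.
    destruct (excluded_middle_informative (z = c)) as [Ez|Ez];
    destruct (excluded_middle_informative (w = c)) as [Ew|Ew].
    + intros; congruence.
    + destruct (excluded_middle_informative (exists n, g n = w)) as [Hw'|Hw']; intros E.
      * apply Hg2 in E; discriminate.
      * exfalso; apply Hw'; eauto.
    + destruct (excluded_middle_informative (exists n, g n = z)) as [Hz'|Hz']; intros E.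
      * apply Hg2 in E; discriminate.
      * exfalso; apply Hz'; eauto.
    + destruct (excluded_middle_informative (exists n, g n = z)) as [Hz'|Hz'];
      destruct (excluded_middle_informative (exists n, g n = w)) as [Hw'|Hw']; intros E.
      * apply Hg2 in E. injection E as E.
        pose proof (epsilon_spec (inhabits 0) (fun n => g n = z) Hz') as E1.
        pose proof (epsilon_spec (inhabits 0) (fun n => g n = w) Hw') as E2.
        simpl in E1, E2. rewrite <- E1, <- E2, E. reflexivity.
      * exfalso; apply Hw'; eauto.
      * exfalso; apply Hz'; eauto.
      * exact E.
Qed.

Definition Mx (a b : K) : K := if excluded_middle_informative (lt a b) then b else a.

Lemma Mx_ge a b : le lt a (Mx a b) /\ le lt b (Mx a b).
Proof.
  unfold Mx, le. destruct (excluded_middle_informative (lt a b)); auto.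
  split; auto. destruct (lt_tri a b) as [?|[?|?]]; auto; contradiction.
Qed.

Lemma Mx_cases a b : Mx a b = a \/ Mx a b = b.
Proof. unfold Mx. destruct (excluded_middle_informative (lt a b)); auto. Qed.

Definition MP (p : K * K) := Mx (fst p) (snd p).
Definition Rp (p q : K * K) : Prop :=
  lt (MP p) (MP q) \/ (MP p = MP q /\ (lt (fst p) (fst q) \/ (fst p = fst q /\ lt (snd p) (snd q)))).

Lemma Rp_wf : well_founded Rp.
Proof.
  assert (H : forall m a b, MP (a, b) = m -> Acc Rp (a, b)).
  { intros m. induction m as [m IHm] using (well_founded_ind lt_wf).
    intros a. induction a as [a IHa] using (well_founded_ind lt_wf).
    intros b. induction b as [b IHb] using (well_founded_ind lt_wf).
    intros Em. constructor. intros [a' b'] HR.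
    destruct HR as [H|[E [H|[E2 H]]]]; simpl in *.
    - apply (IHm (MP (a', b'))); auto. rewrite <- Em; auto.
    - apply (IHa a' H). rewrite E; auto.
    - subst a'. apply (IHb b' H). rewrite E; auto. }
  intros [a b]. apply (H (MP (a, b))). reflexivity.
Qed.

Lemma Rp_trans p q r : Rp p q -> Rp q r -> Rp p r.
Proof.
  unfold Rp. intros [H1|[E1 H1]] [H2|[E2 H2]].
  - left; eapply lt_trans; eauto.
  - left; rewrite <- E2; auto.
  - left; rewrite E1; auto.
  - right. split; [congruence|].
    destruct H1 as [H1|[F1 H1]]; destruct H2 as [H2|[F2 H2]].
    + left; eapply lt_trans; eauto.
    + left; rewrite <- F2; auto.
    + left; rewrite F1; auto.
    + right; split; [congruence| eapply lt_trans; eauto].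
Qed.

Lemma Rp_tot p q : Rp p q \/ p = q \/ Rp q p.
Proof.
  unfold Rp. destruct (lt_tri (MP p) (MP q)) as [H|[E|H]]; [left; left; exact H| |right; right; left; exact H].
  destruct (lt_tri (fst p) (fst q)) as [H1|[E1|H1]].
  - left; right; auto.
  - destruct (lt_tri (snd p) (snd q)) as [H2|[E2|H2]].
    + left; right; auto.
    + right; left. destruct p, q; simpl in *; congruence.
    + right; right; right; auto.
  - right; right; right; auto.
Qed.

Lemma hess : forall c, is_infinite lt c ->
  exists e : K * K -> K, inj_on (fun p => lt (fst p) c /\ lt (snd p) c) e (seg c).
Proof.
  intros c. induction c as [c IH] using (well_founded_ind lt_wf). intros Hinf.
  destruct (classic (is_cardinal lt c)) as [Hc|Hnc].
  - destruct (rank_lemma (K * K) (fun p => lt (fst p) c /\ lt (snd p) c) Rp Rp_wf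
       (fun p q r _ _ _ => @Rp_trans p q r) (fun p q _ _ => Rp_tot p q) c) as [r [Hr _]].
    2: { exists r; exact Hr. }
    intros [a b] [Ha Hb] [h [Hh1 Hh2]]. simpl in Ha, Hb.
    set (gm := Mx a b).
    assert (Hgm : lt gm c) by (unfold gm; destruct (Mx_cases a b) as [E|E]; rewrite E; auto).
    assert (Hq : forall q, Rp q (a, b) -> le lt (fst q) gm /\ le lt (snd q) gm).
    { intros q Hq. assert (Hm : le lt (MP q) gm).
      { destruct Hq as [Hq|[Hq _]]; [left; exact Hq| right; exact Hq]. }
      destruct (Mx_ge (fst q) (snd q)) as [G1 G2].
      split; eapply le_trans; eauto. }
    destruct (classic (is_infinite lt gm)) as [Hgi|Hgf].
    + destruct (IH gm Hgm Hgi) as [e [He1 He2]].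
      destruct (hotel gm Hgi) as [phi [Hp1 Hp2]].
      apply (Hc gm Hgm).
      exists (fun z => e (phi (fst (h z)), phi (snd (h z)))). split.
      * intros z Hz. destruct (Hh1 z Hz) as [_ HR]. destruct (Hq _ HR).
        apply He1. simpl. split; apply Hp1; auto.
      * intros z w Hz Hw E.
        destruct (Hh1 z Hz) as [_ HRz]. destruct (Hh1 w Hw) as [_ HRw].
        destruct (Hq _ HRz), (Hq _ HRw).
        apply He2 in E; try solve [simpl; split; apply Hp1; auto]. simpl in E. injection E as E1 E2.
        apply Hp2 in E1; auto. apply Hp2 in E2; auto.
        apply Hh2; auto. destruct (h z), (h w); simpl in *; congruence.
    + destruct (fin_or_inf (seg gm)) as [[L HL]|Hi]; [|exact (Hgf Hi)].
      destruct Hinf as [g [Hg1 Hg2]].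
      apply (pigeon (K * K) (list_prod (gm :: L) (gm :: L)) (fun n => h (g n))).
      * intros n. destruct (Hh1 (g n) (Hg1 n)) as [_ HR].
        destruct (Hq _ HR) as [Q1 Q2].
        rewrite (surjective_pairing (h (g n))). apply in_prod.
        -- destruct Q1 as [Q1|Q1]; [right; apply HL; exact Q1| left; auto].
        -- destruct Q2 as [Q2|Q2]; [right; apply HL; exact Q2| left; auto].
      * intros n m E. apply Hg2. apply Hh2; [apply Hg1|apply Hg1|exact E].
  - unfold is_cardinal in Hnc. apply not_all_ex_not in Hnc. destruct Hnc as [t Ht].
    apply imply_to_and in Ht. destruct Ht as [Htc Ht]. apply NNPP in Ht.
    destruct Ht as [f [Hf1 Hf2]].
    destruct Hinf as [g [Hg1 Hg2]].
    destruct (IH t Htc) as [e [He1 He2]].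
    { exists (fun n => f (g n)). split; auto. }
    exists (fun p => e (f (fst p), f (snd p))). split.
    + intros [a b] [Ha Hb]. simpl in *. eapply lt_trans; [apply He1; simpl; auto| auto].
    + intros [a b] [a' b'] [Ha Hb] [Ha' Hb'] E. simpl in *.
      apply He2 in E; simpl; auto. injection E as E1 E2.
      apply Hf2 in E1; auto. apply Hf2 in E2; auto. congruence.
Qed.

Definition pairs_in (c : K) : K * K -> Prop := fun p => lt (fst p) c /\ lt (snd p) c.

Fixpoint clist (e : K * K -> K) (t0 t1 : K) (l : list K) : K :=
  match l with nil => e (t0, t0) | a :: l => e (t1, e (a, clist e t0 t1 l)) end.

Lemma clist_spec lam e t0 t1 : inj_on (pairs_in lam) e (seg lam) -> lt t0 lam -> lt t1 lam ->
  t0 <> t1 -> inj_on (fun l => forall a, In a l -> lt a lam) (clist e t0 t1) (seg lam).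
Proof.
  intros [He1 He2] H0 H1 Hne.
  assert (Hr : forall l, (forall a, In a l -> lt a lam) -> lt (clist e t0 t1 l) lam).
  { induction l as [|a l IH]; intros Hl; simpl.
    - apply He1. split; auto.
    - apply He1. split; simpl; [exact H1|]. apply He1. split; simpl.
      + apply Hl; simpl; auto.
      + apply IH. intros; apply Hl; simpl; auto. }
  assert (Hcons : forall a l, (forall x, In x (a :: l) -> lt x lam) ->
     pairs_in lam (a, clist e t0 t1 l) /\ pairs_in lam (t1, e (a, clist e t0 t1 l))).
  { intros a l Hl. assert (pairs_in lam (a, clist e t0 t1 l)).
    { split; simpl; [apply Hl; left; reflexivity| apply Hr; intros; apply Hl; right; assumption]. }
    split; auto. split; simpl; [exact H1| apply He1; auto]. }
  assert (H00 : pairs_in lam (t0, t0)) by (split; simpl; exact H0).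
  split; [exact Hr|].
  induction x as [|a l IH]; intros [|b l'] Hl Hl' E; simpl in E.
  - reflexivity.
  - exfalso. apply He2 in E; [|exact H00|apply Hcons; exact Hl'].
    injection E as E _. exact (Hne E).
  - exfalso. apply He2 in E; [|apply Hcons; exact Hl|exact H00].
    injection E as E _. exact (Hne (eq_sym E)).
  - apply He2 in E; [|apply Hcons; exact Hl|apply Hcons; exact Hl'].
    injection E as E. apply He2 in E; [|apply Hcons; exact Hl|apply Hcons; exact Hl'].
    injection E as E1 E2. subst b. f_equal. apply IH; auto.
    + intros; apply Hl; simpl; auto.
    + intros; apply Hl'; simpl; auto.
Qed.

Lemma map_inj_on {A B : Type} (P : A -> Prop) (f : A -> B) :
  (forall x y, P x -> P y -> f x = f y -> x = y) ->
  forall l1 l2, (forall a, In a l1 -> P a) -> (forall a, In a l2 -> P a) ->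
  map f l1 = map f l2 -> l1 = l2.
Proof.
  intros Hf. induction l1 as [|a l1 IH]; intros [|b l2] H1 H2 E; simpl in E; try discriminate; auto.
  injection E as E E'. f_equal.
  - apply Hf; auto; [apply H1|apply H2]; simpl; auto.
  - apply IH; auto; intros; [apply H1|apply H2]; simpl; auto.
Qed.

Section Cof.
Variables (sg sg' d : K) (Cc : (K -> Prop) -> Prop).
Hypothesis Hinf : is_infinite lt sg.
Hypothesis Hcard' : is_cardinal lt sg'.
Hypothesis Hlt : lt sg sg'.
Hypothesis Hcof : cofinal_in lt sg d Cc.

Definition cover (l : list K) : K -> Prop :=
  epsilon (inhabits (fun _ : K => False)) (fun c => Cc c /\ subset (fun a => In a l) c).

Lemma cover_spec l : (forall a, In a l -> lt a d) -> Cc (cover l) /\ subset (fun a => In a l) (cover l).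
Proof.
  intros Hl. unfold cover. apply (epsilon_spec (inhabits (fun _ : K => False)) (fun c => Cc c /\ subset (fun a => In a l) c)). destruct Hcof as [_ H2]. apply H2. split; [exact Hl|].
  intros [h [H1 H2']]. destruct Hinf as [g [Hg1 Hg2]].
  apply (pigeon K l (fun n => h (g n))).
  - intro n; apply H1, Hg1.
  - intros n m E; apply Hg2, H2'; auto.
Qed.

Lemma cover_d l : (forall a, In a l -> lt a d) -> forall z, cover l z -> lt z d.
Proof.
  intros Hl z Hz. destruct (cover_spec l Hl) as [Hc _].
  destruct Hcof as [H1 _]. destruct (H1 _ Hc) as [Hs _]. apply Hs, Hz.
Qed.

Fixpoint ys (y : K -> Prop) (n : nat) : K -> Prop :=
  match n with
  | 0 => y
  | S n => fun z => ys y n z \/ exists l, (forall a, In a l -> ys y n a) /\ cover l z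
  end.

Lemma ys_d y : subset y (seg d) -> forall n z, ys y n z -> lt z d.
Proof.
  intros Hy n. induction n as [|n IH]; simpl; intros z Hz.
  - apply Hy, Hz.
  - destruct Hz as [Hz|[l [Hl Hz]]]; auto.
    apply (cover_d l); auto.
Qed.

Lemma ys_mono y n m : n <= m -> forall z, ys y n z -> ys y m z.
Proof. induction 1; auto. intros z Hz. simpl. left; auto. Qed.

Lemma ys_list y l : (forall a, In a l -> exists n, ys y n a) -> exists N, forall a, In a l -> ys y N a.
Proof.
  induction l as [|a l IH]; intros H.
  - exists 0. intros a [].
  - destruct (H a (or_introl eq_refl)) as [n Hn].
    destruct IH as [N HN]. { intros; apply H; simpl; auto. }
    exists (Nat.max n N). intros b [<-|Hb].
    + apply (ys_mono y n); auto. apply Nat.le_max_l.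
    + apply (ys_mono y N); auto. apply Nat.le_max_r.
Qed.

Lemma cof_main y : P_below lt sg' d y ->
  exists x, (P_below lt sg' d x /\ forall s, finite_set s -> subset s x ->
               exists c, Cc c /\ subset s c /\ subset c x) /\ subset y x.
Proof.
  intros [Hyd Hyc].
  destruct (card_bound y sg' Hyc) as [bt [Hbt [fy Hfy]]].
  assert (Hlam : exists lam, lt lam sg' /\ le lt bt lam /\ le lt sg lam).
  { destruct (lt_tri bt sg) as [H|[H|H]].
    - exists sg. unfold le. auto.
    - exists sg. unfold le. auto.
    - exists bt. unfold le. auto. }
  destruct Hlam as [lam [Hlam [Hbl Hsl]]].
  assert (Hil : is_infinite lt lam).
  { destruct Hinf as [g [Hg1 Hg2]]. exists g. split; auto. intros n; eapply lt_le_trans; eauto. }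
  destruct (hess lam Hil) as [e [He1 He2]].
  destruct Hil as [g [Hg1 Hg2]].
  assert (Hg01 : g 0 <> g 1) by (intro E; apply Hg2 in E; discriminate).
  destruct (clist_spec lam e (g 0) (g 1) (conj He1 He2) (Hg1 0) (Hg1 1) Hg01) as [Hc1 Hc2].
  set (cl := clist e (g 0) (g 1)) in *.
  assert (Hyd' : subset y (seg d)) by exact Hyd.
  assert (Hcov : forall l, (forall a, In a l -> lt a d) -> exists h, inj_on (cover l) h (seg lam)).
  { intros l Hl. destruct (cover_spec l Hl) as [Hc _]. destruct Hcof as [H1 _].
    destruct (H1 _ Hc) as [_ Hcc]. destruct (card_bound _ _ Hcc) as [bc [Hbc [h [Hh1 Hh2]]]].
    exists h. split; auto. intros z Hz. eapply lt_trans; [apply Hh1; exact Hz|].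
    eapply lt_le_trans; eauto. }
  set (hc := fun l => epsilon (inhabits (fun z : K => z)) (fun h => inj_on (cover l) h (seg lam))).
  assert (Hsz : forall n, exists f, inj_on (ys y n) f (seg lam)).
  { induction n as [|n [fn [Hf1 Hf2]]].
    - exists fy. destruct Hfy as [H1 H2]. split; auto. intros z Hz.
      eapply lt_le_trans; [apply H1; exact Hz| exact Hbl].
    - set (pick := fun z => epsilon (inhabits nil)
                      (fun l => (forall a, In a l -> ys y n a) /\ cover l z)).
      assert (Hpick : forall z, ys y (S n) z -> ~ ys y n z ->
                (forall a, In a (pick z) -> ys y n a) /\ cover (pick z) z).
      { intros z Hz Hn. destruct Hz as [Hz|Hz]; [contradiction|].
        apply (epsilon_spec (inhabits nil) (fun l => (forall a, In a l -> ys y n a) /\ cover l z)).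
        exact Hz. }
      assert (Hpd : forall z, ys y (S n) z -> ~ ys y n z -> forall a, In a (pick z) -> lt a d).
      { intros z Hz Hn a Ha. apply (ys_d y Hyd' n). apply (Hpick z Hz Hn); auto. }
      assert (Hhc : forall z, ys y (S n) z -> ~ ys y n z -> inj_on (cover (pick z)) (hc (pick z)) (seg lam)).
      { intros z Hz Hn. apply (epsilon_spec (inhabits (fun z : K => z))
            (fun h => inj_on (cover (pick z)) h (seg lam))). apply Hcov. apply (Hpd z Hz Hn). }
      assert (Hmp : forall z, ys y (S n) z -> ~ ys y n z -> forall a, In a (map fn (pick z)) -> lt a lam).
      { intros z Hz Hn a Ha. apply in_map_iff in Ha. destruct Ha as [b [<- Hb]].
        apply Hf1. apply (Hpick z Hz Hn); auto. }
      exists (fun z => if excluded_middle_informative (ys y n z) then e (g 0, fn z)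
                     else e (g 1, e (cl (map fn (pick z)), hc (pick z) z))).
      split.
      + intros z Hz. destruct (excluded_middle_informative (ys y n z)) as [Hn|Hn].
        * apply He1. split; simpl; [apply Hg1| apply Hf1; exact Hn].
        * apply He1. split; simpl; [apply Hg1|]. apply He1. split; simpl.
          -- apply Hc1. apply (Hmp z Hz Hn).
          -- apply (Hhc z Hz Hn). apply (Hpick z Hz Hn).
      + intros z w Hz Hw.
        assert (HR : forall z, ys y (S n) z -> ~ ys y n z ->
                  lt (e (cl (map fn (pick z)), hc (pick z) z)) lam).
        { intros u Hu Hn. apply He1. split; simpl.
          -- apply Hc1. apply (Hmp u Hu Hn).
          -- apply (Hhc u Hu Hn). apply (Hpick u Hu Hn). }
        destruct (excluded_middle_informative (ys y n z)) as [Hn|Hn];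
        destruct (excluded_middle_informative (ys y n w)) as [Hn'|Hn']; intros E.
        * apply He2 in E; try solve [split; simpl; first [apply Hg1 | apply Hf1; assumption | apply HR; assumption]].
          injection E as E. apply Hf2; auto.
        * apply He2 in E; try solve [split; simpl; first [apply Hg1 | apply Hf1; assumption | apply HR; assumption]].
          injection E as E. apply Hg2 in E. discriminate.
        * apply He2 in E; try solve [split; simpl; first [apply Hg1 | apply Hf1; assumption | apply HR; assumption]].
          injection E as E. apply Hg2 in E. discriminate.
        * apply He2 in E; try solve [split; simpl; first [apply Hg1 | apply Hf1; assumption | apply HR; assumption]].
          injection E as E. apply He2 in E.
          2: { split; simpl; [apply Hc1; apply (Hmp z Hz Hn) | apply (Hhc z Hz Hn); apply (Hpick z Hz Hn)]. }
          2: { split; simpl; [apply Hc1; apply (Hmp w Hw Hn') | apply (Hhc w Hw Hn'); apply (Hpick w Hw Hn')]. }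
          injection E as E1 E2.
          apply Hc2 in E1; [| apply (Hmp z Hz Hn) | apply (Hmp w Hw Hn')].
          apply (map_inj_on (ys y n) fn Hf2) in E1;
            [| apply (Hpick z Hz Hn) | apply (Hpick w Hw Hn')].
          destruct (Hhc z Hz Hn) as [_ Hi].
          apply Hi; auto.
          -- apply (Hpick z Hz Hn).
          -- rewrite E1. apply (Hpick w Hw Hn').
          -- rewrite E2, E1. reflexivity. }
  set (F := fun n => epsilon (inhabits (fun z : K => z)) (fun f => inj_on (ys y n) f (seg lam))).
  assert (HF : forall n, inj_on (ys y n) (F n) (seg lam)).
  { intros n. apply (epsilon_spec (inhabits (fun z : K => z)) (fun f => inj_on (ys y n) f (seg lam))).
    apply Hsz. }
  set (x := fun z => exists n, ys y n z).
  set (N := fun z => epsilon (inhabits 0) (fun n => ys y n z)).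
  assert (HN : forall z, x z -> ys y (N z) z).
  { intros z Hz. apply (epsilon_spec (inhabits 0) (fun n => ys y n z)). exact Hz. }
  exists x. split; [split; [split|]|].
  - intros z [n Hz]. apply (ys_d y Hyd' n z Hz).
  - intros [h [Hh1 Hh2]]. apply (Hcard' lam Hlam).
    exists (fun z => e (g (N (h z)), F (N (h z)) (h z))). split.
    + intros z Hz. apply He1. split; simpl; [apply Hg1|]. apply HF. apply HN. apply Hh1, Hz.
    + intros z w Hz Hw E. apply He2 in E.
      2: { split; simpl; [apply Hg1|]. apply HF. apply HN. apply Hh1, Hz. }
      2: { split; simpl; [apply Hg1|]. apply HF. apply HN. apply Hh1, Hw. }
      injection E as E1 E2. apply Hg2 in E1.
      apply Hh2; auto. rewrite E1 in E2.
      destruct (HF (N (h w))) as [_ Hi].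
      apply Hi; [rewrite <- E1; apply HN, Hh1, Hz | apply HN, Hh1, Hw | exact E2].
  - intros s [l Hl] Hs.
    destruct (ys_list y l) as [M HM].
    { intros a Ha. apply Hs. apply Hl. exact Ha. }
    assert (Hld : forall a, In a l -> lt a d) by (intros a Ha; apply (ys_d y Hyd' M); auto).
    destruct (cover_spec l Hld) as [Hc Hsub].
    exists (cover l). split; [exact Hc|split].
    + intros a Ha. apply Hsub. apply Hl. exact Ha.
    + intros z Hz. exists (S M). simpl. right. exists l. auto.
  - intros z Hz. exists 0. exact Hz.
Qed.
End Cof.

End Main.

Theorem corollary4p5 (K : Type) (lt : K -> K -> Prop)
  (Hwo : strict_well_order lt)
  (Hkappa : regular_uncountable_cardinal lt)
  (J : (K -> Prop) -> Prop)
  (HJ : is_ideal lt J) (HJc : kappa_complete lt J)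
  (sigma : K) (Hs_card : is_cardinal lt sigma) (Hs_inf : is_infinite lt sigma) :
  wedge_minus lt sigma J ->
  forall sigma' : K, is_cardinal lt sigma' -> le lt sigma sigma' ->
    wedge_minus lt sigma' J.
Proof.
  intros [C [HC1 HC2]] sg' Hc' Hle.
  assert (inhK : inhabited K) by exact (inhabits sigma).
  destruct Hle as [Hlt | <-]; [| exists C; split; auto].
  exists (fun i d x => P_below lt sg' d x /\ forall s, finite_set s -> subset s x ->
            exists c, C i d c /\ subset s c /\ subset c x).
  split.
  - intros i d Hl Hd Hi. split.
    + intros x [H _]; exact H.
    + intros y Hy.
      assert (Hsd : le lt sigma d) by (left; eapply (lt_le_trans K lt Hwo); eauto).
      destruct (cof_main K lt Hwo inhK sigma sg' d (C i d) Hs_inf Hc' Hlt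
                  (HC1 i d Hl Hsd Hi) y Hy) as [x [Hx Hyx]].
      exists x; auto.
  - intros D HD [F HF] HJB.
    set (D2 := fun x => P_kappa lt sigma x /\ forall s, finite_set s -> subset s x -> x (F s)).
    apply (HC2 D2).
    + intros x [H _]; exact H.
    + exists F. intros x Hx Hcl. split; auto.
    + destruct HJ as [_ [_ [Hb [Hsub Hun]]]].
      eapply Hsub.
      * apply Hun; [exact HJB| apply Hb; exists sg'; intros x Hx; exact Hx].
      * intros d [Hl [Hsd [i [Hi Hsub']]]]. simpl.
        destruct (lt_tri K lt Hwo d sg') as [H|[E|H]]; [right; exact H| left | left].
        -- split; [exact Hl|split; [right; auto|]]. exists i. split; [exact Hi|].
           intros x [[_ Hxp] Hxc]. apply HF; [exact Hxp|].
           intros s Hs Hsx. destruct (Hxc s Hs Hsx) as [c [Hc [Hsc Hcx]]].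
           apply Hcx. apply (Hsub' c Hc); auto.
        -- split; [exact Hl|split; [left; auto|]]. exists i. split; [exact Hi|].
           intros x [[_ Hxp] Hxc]. apply HF; [exact Hxp|].
           intros s Hs Hsx. destruct (Hxc s Hs Hsx) as [c [Hc [Hsc Hcx]]].
           apply Hcx. apply (Hsub' c Hc); auto.
Qed.
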